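(* Fix $l,r>0$, $0<\alpha<\beta<1$, diffusion constants $D_1,D_2>0$ (so $\delta=\frac{D_2-D_1}{D_2+D_1}$) and $V\in\mathbb{R}$. Then there exists a unique reversal permanent charge, i.e. a unique $Q_0\in\mathbb{R}$ for which there is $A\in(0,A_M)$ with $G_1(Q_0,A,\delta)=V$ and $G_2(Q_0,A,\delta)=0$, if and only if $|V|<\big|\ln\frac{l}{r}\big|$.
   Context: Setting: steady zero-current Poisson–Nernst–Planck model for two ion species ($n=2$) with valences $z_1=-z_2=1$, dimensionless transmembrane potential $V$, electroneutral boundary concentrations $l$ (left) and $r$ (right), permanent charge $2Q_0$ on $(a,b)$ and $0$ elsewhere on $(0,1)$; $\alpha=H(a)/H(1)$, $\beta=H(b)/H(1)$ with $H(x)=\int_0^x ds/h(s)$, $h>0$ the cross-sectional area. A reversal permanent charge is a permanent charge producing zero total current at potential $V$; in the singular limit this is reduced to the algebraic system $G_1=V$, $G_2=0$ below. For $Q_0\in\mathbb{R}$, $A>0$ define $B=\frac{1-\beta}{\alpha}(l-A)+r$, $A_M=l+\frac{\alpha}{1-\beta}r$, $S_a=\sqrt{Q_0^2+A^2}$, $S_b=\sqrt{Q_0^2+B^2}$, $N=A-l+S_a-S_b$, $G_1(Q_0,A,\delta)=\delta\Big(\ln\frac{S_a+\delta Q_0}{S_b+\delta Q_0}+\ln\frac{l}{r}\Big)-(1+\delta)\ln\frac{A}{B}+\ln\frac{S_a-Q_0}{S_b-Q_0}$, $G_2(Q_0,A,\delta)=\delta Q_0\ln\frac{S_a+\delta Q_0}{S_b+\delta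 Q_0}-N$. *)

(* Defs.v *)
From Stdlib Require Import Reals.
Open Scope R_scope.

Definition PNP_B (l r alpha beta A : R) : R := (1 - beta) / alpha * (l - A) + r.
Definition PNP_AM (l r alpha beta : R) : R := l + alpha / (1 - beta) * r.
Definition PNP_Sa (Q0 A : R) : R := sqrt (Q0 ^ 2 + A ^ 2).
Definition PNP_Sb (l r alpha beta Q0 A : R) : R :=
  sqrt (Q0 ^ 2 + (PNP_B l r alpha beta A) ^ 2).
Definition PNP_N (l r alpha beta Q0 A : R) : R :=
  A - l + PNP_Sa Q0 A - PNP_Sb l r alpha beta Q0 A.

Definition PNP_G1 (l r alpha beta Q0 A delta : R) : R :=
  let Sa := PNP_Sa Q0 A in
  let Sb := PNP_Sb l r alpha beta Q0 A in
  let B := PNP_B l r alpha beta A in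
  delta * (ln ((Sa + delta * Q0) / (Sb + delta * Q0)) + ln (l / r))
  - (1 + delta) * ln (A / B)
  + ln ((Sa - Q0) / (Sb - Q0)).

Definition PNP_G2 (l r alpha beta Q0 A delta : R) : R :=
  let Sa := PNP_Sa Q0 A in
  let Sb := PNP_Sb l r alpha beta Q0 A in
  delta * Q0 * ln ((Sa + delta * Q0) / (Sb + delta * Q0))
  - PNP_N l r alpha beta Q0 A.

Definition reversal_charge (l r alpha beta delta V Q0 : R) : Prop :=
  exists A : R, 0 < A /\ A < PNP_AM l r alpha beta /\
    PNP_G1 l r alpha beta Q0 A delta = V /\
    PNP_G2 l r alpha beta Q0 A delta = 0.

(* Main.v *)
Require Import Defs.
From Stdlib Require Import Reals Lra Ranalysis5 ClassicalEpsilon.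
From Coquelicot Require Import Coquelicot.
Open Scope R_scope.

Ltac sidec := repeat match goal with
  | |- _ /\ _ => split
  | |- True => exact I
  | |- _ <> _ => let H := fresh in intro H; nra
  | |- _ => nra
  end.

Ltac neq0 := repeat match goal with
  | |- _ /\ _ => split
  | |- True => exact I
  | |- _ <> _ => let H := fresh in intro H; nra
  end.

Definition Kf (t:R) := sqrt (1 - t^2) / t.
Definition nf (d t:R) := 1/t - d * ln ((1 + d*t)/t).
Definition mf (d t:R) := d * ln (1 + d*t) + (1-d)/2 * ln (1-t) - (1+d)/2 * ln (1+t).

Lemma sq_pos t : 0 < t < 1 -> 0 < 1 - t^2.
Proof. intros. nra. Qed.

Lemma dK t : 0 < t < 1 -> derivable_pt_lim Kf t (-1/(t^2 * sqrt(1-t^2))).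
Proof.
  intros Ht. apply is_derive_Reals. unfold Kf.
  assert (Hs: 0 < sqrt (1 - t^2)) by (apply sqrt_lt_R0; apply sq_pos; auto).
  assert (Hss: sqrt (1-t^2) * sqrt (1-t^2) = 1 - t^2) by (apply sqrt_sqrt; pose proof (sq_pos t Ht); lra).
  auto_derive.
  - clear Hs Hss. sidec.
  - replace (1 + - (t * (t * 1))) with (1 - t^2) by ring.
    field_simplify; [| lra | lra].
    rewrite pow2_sqrt by (pose proof (sq_pos t Ht); lra).
    field. lra.
Qed.

Lemma dn d t : -1 < d < 1 -> 0 < t < 1 -> derivable_pt_lim (nf d) t (-1/(t^2*(1+d*t))).
Proof.
  intros Hd Ht. apply is_derive_Reals. unfold nf.
  assert (0 < 1 + d*t) by nra.
  auto_derive.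
  - sidec. apply Rdiv_lt_0_compat; lra.
  - field. sidec.
Qed.

Lemma dm d t : -1 < d < 1 -> -1 < t < 1 -> derivable_pt_lim (mf d) t (-(1-d^2)/((1+d*t)*(1-t^2))).
Proof.
  intros Hd Ht. apply is_derive_Reals. unfold mf.
  assert (0 < 1 + d*t) by nra.
  auto_derive.
  - sidec.
  - field. sidec.
Qed.

Lemma Kf_pos t : 0 < t < 1 -> 0 < Kf t.
Proof. intros. unfold Kf. apply Rdiv_lt_0_compat; [apply sqrt_lt_R0; apply sq_pos|]; lra. Qed.

Lemma dlnK t : 0 < t < 1 -> derivable_pt_lim (fun t => ln (Kf t)) t (-1/(t*(1-t^2))).
Proof.
  intros Ht. apply is_derive_Reals. unfold Kf.
  assert (Hs: 0 < sqrt (1 - t^2)) by (apply sqrt_lt_R0; apply sq_pos; auto).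
  pose proof (sq_pos t Ht).
  auto_derive.
  - replace (1 + - (t * (t * 1))) with (1 - t^2) by ring.
    repeat split; try (intro; lra); try lra.
    apply Rmult_lt_0_compat; [auto | apply Rinv_0_lt_compat; lra].
  - replace (1 + - (t * (t * 1))) with (1 - t^2) by ring.
    field_simplify; [| neq0 | neq0].
    rewrite pow2_sqrt by lra.
    field. neq0.
Qed.

Lemma dinvsq t : 0 < t -> derivable_pt_lim (fun t => 1/t^2) t (-2/t^3).
Proof.
  intros Ht. apply is_derive_Reals. auto_derive.
  - sidec.
  - field. lra.
Qed.

Lemma neg1_div X : 0 < X -> -1 / X < 0.
Proof. intros. unfold Rdiv. assert (0 < / X) by (apply Rinv_0_lt_compat; auto). nra. Qed.

Lemma negA_div a X : 0 < a -> 0 < X -> - a / X < 0.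
Proof. intros. unfold Rdiv. assert (0 < / X) by (apply Rinv_0_lt_compat; auto). nra. Qed.

Lemma mvt_lt f f' x y : x < y -> (forall c, x <= c <= y -> derivable_pt_lim f c (f' c)) ->
  (forall c, x < c < y -> f' c < 0) -> f y < f x.
Proof.
  intros Hxy Hd Hn. destruct (MVT_cor2 f f' x y Hxy Hd) as [c [Hc1 Hc2]].
  pose proof (Hn c Hc2). assert (0 < (- f' c) * (y - x)) by (apply Rmult_lt_0_compat; lra). lra.
Qed.

Lemma mvt_gt f f' x y : x < y -> (forall c, x <= c <= y -> derivable_pt_lim f c (f' c)) ->
  (forall c, x < c < y -> 0 < f' c) -> f x < f y.
Proof.
  intros Hxy Hd Hn. destruct (MVT_cor2 f f' x y Hxy Hd) as [c [Hc1 Hc2]].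
  pose proof (Hn c Hc2). assert (0 < (f' c) * (y - x)) by (apply Rmult_lt_0_compat; lra). lra.
Qed.

Lemma mvt_ge f f' x y : x < y -> (forall c, x <= c <= y -> derivable_pt_lim f c (f' c)) ->
  (forall c, x < c < y -> 0 <= f' c) -> f x <= f y.
Proof.
  intros Hxy Hd Hn. destruct (MVT_cor2 f f' x y Hxy Hd) as [c [Hc1 Hc2]].
  pose proof (Hn c Hc2). assert (0 <= (f' c) * (y - x)) by (apply Rmult_le_pos; lra). lra.
Qed.

Lemma Kf_decr x y : 0 < x -> x < y -> y < 1 -> Kf y < Kf x.
Proof.
  intros. apply (mvt_lt Kf (fun t => -1/(t^2 * sqrt(1-t^2))) x y); auto.
  - intros c Hc. apply dK. lra.
  - intros c Hc. assert (0 < sqrt (1 - c^2)) by (apply sqrt_lt_R0; apply sq_pos; lra).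
    assert (0 < c^2 * sqrt (1-c^2)) by (apply Rmult_lt_0_compat; nra).
    apply neg1_div; auto.
Qed.

Lemma nf_decr d x y : -1 < d < 1 -> 0 < x -> x < y -> y < 1 -> nf d y < nf d x.
Proof.
  intros. apply (mvt_lt (nf d) (fun t => -1/(t^2*(1+d*t))) x y); auto.
  - intros c Hc. apply dn; lra.
  - intros c Hc. assert (0 < c^2*(1+d*c)) by (apply Rmult_lt_0_compat; nra).
    apply neg1_div; auto.
Qed.

Lemma mf_decr d x y : -1 < d < 1 -> -1 < x -> x < y -> y < 1 -> mf d y < mf d x.
Proof.
  intros. apply (mvt_lt (mf d) (fun t => -(1-d^2)/((1+d*t)*(1-t^2))) x y); auto.
  - intros c Hc. apply dm; lra.
  - intros c Hc. assert (0 < (1+d*c)*(1-c^2)) by (apply Rmult_lt_0_compat; nra).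
    apply negA_div; auto; nra.
Qed.

Definition rho (d al be t : R) := (al * Kf t * (1/t + d) + be * (Kf t)^2) / (1 - d^2).

Lemma inv_gt1 t : 0 < t < 1 -> 1 < 1/t.
Proof. intros. apply (Rmult_lt_reg_r t); [lra|]. field_simplify; lra. Qed.

Lemma inv_decr x y : 0 < x -> x < y -> 1/y < 1/x.
Proof. intros. apply Rmult_lt_reg_r with (x*y); [nra|]. field_simplify; nra. Qed.

Lemma rho_decr d al be x y : -1 < d < 1 -> 0 <= al -> 0 < be -> 0 < x -> x < y -> y < 1 ->
  rho d al be y < rho d al be x.
Proof.
  intros Hd Hal Hbe Hx Hxy Hy. unfold rho.
  pose proof (Kf_decr x y Hx Hxy Hy). pose proof (Kf_pos y (conj (Rlt_trans _ _ _ Hx Hxy) Hy)).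
  pose proof (inv_decr x y Hx Hxy). pose proof (inv_gt1 y (conj (Rlt_trans _ _ _ Hx Hxy) Hy)).
  apply Rmult_lt_compat_r. apply Rinv_0_lt_compat; nra.
  assert (Kf y * (1/y+d) <= Kf x * (1/x + d)) by (apply Rmult_le_compat; lra).
  assert (al * (Kf y * (1/y+d)) <= al * (Kf x * (1/x + d))) by (apply Rmult_le_compat_l; lra).
  assert (be * Kf y ^2 < be * Kf x ^ 2).
  { apply Rmult_lt_compat_l; auto. simpl. nra. }
  lra.
Qed.

Lemma hder_id d al be lam c : -1 < d < 1 -> 0 < c < 1 ->
  al * (-1/(c^2*sqrt(1-c^2))) + be * (-1/(c^2*(1+d*c))) - lam * (-(1-d^2)/((1+d*c)*(1-c^2)))
  = (-(1-d^2)/((1+d*c)*(1-c^2))) * (rho d al be c - lam).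
Proof.
  intros Hd Hc. unfold rho, Kf.
  assert (Hs: 0 < sqrt (1 - c^2)) by (apply sqrt_lt_R0; apply sq_pos; auto).
  pose proof (sq_pos c Hc).
  assert (0 < 1 + d*c) by nra.
  set (s := sqrt (1 - c^2)) in *.
  replace (1 - c^2) with (s*s) by (unfold s; rewrite sqrt_sqrt; lra).
  field. neq0.
Qed.

Lemma dh d al be lam c : -1 < d < 1 -> 0 < c < 1 ->
  derivable_pt_lim (fun t => al * Kf t + be * nf d t - lam * mf d t) c
   (al * (-1/(c^2*sqrt(1-c^2))) + be * (-1/(c^2*(1+d*c))) - lam * (-(1-d^2)/((1+d*c)*(1-c^2)))).
Proof.
  intros Hd Hc.
  apply (derivable_pt_lim_minus (fun t => al*Kf t + be*nf d t) (fun t => lam * mf d t)).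
  - apply (derivable_pt_lim_plus (fun t => al*Kf t) (fun t => be*nf d t)).
    + apply (derivable_pt_lim_scal Kf al). apply dK; auto.
    + apply (derivable_pt_lim_scal (nf d) be). apply dn; auto.
  - apply (derivable_pt_lim_scal (mf d) lam). apply dm; lra.
Qed.

Lemma mprime_neg d c : -1 < d < 1 -> -1 < c < 1 -> -(1-d^2)/((1+d*c)*(1-c^2)) < 0.
Proof. intros. apply negA_div; [nra|]. apply Rmult_lt_0_compat; nra. Qed.

Lemma LT_a d al be x y lam : -1 < d < 1 -> 0 <= al -> 0 < be -> 0 < x -> x < y -> y < 1 ->
  lam <= rho d al be y ->
  (al * Kf x + be * nf d x) - (al * Kf y + be * nf d y) > lam * (mf d x - mf d y).
Proof.
  intros Hd Hal Hbe Hx Hxy Hy Hl.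
  assert (al * Kf y + be * nf d y - lam * mf d y < al * Kf x + be * nf d x - lam * mf d x).
  { apply (mvt_lt (fun t => al * Kf t + be * nf d t - lam * mf d t)
      (fun c => al * (-1/(c^2*sqrt(1-c^2))) + be * (-1/(c^2*(1+d*c))) - lam * (-(1-d^2)/((1+d*c)*(1-c^2))))
      x y Hxy).
    - intros c Hc. apply dh; auto; lra.
    - intros c Hc. rewrite hder_id by lra.
      pose proof (rho_decr d al be c y Hd Hal Hbe ltac:(lra) ltac:(lra) Hy).
      pose proof (mprime_neg d c Hd ltac:(lra)).
      assert (0 < rho d al be c - lam) by lra. nra. }
  lra.
Qed.

Lemma LT_b d al be x y lam : -1 < d < 1 -> 0 <= al -> 0 < be -> 0 < x -> x < y -> y < 1 ->
  rho d al be x <= lam ->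
  (al * Kf x + be * nf d x) - (al * Kf y + be * nf d y) < lam * (mf d x - mf d y).
Proof.
  intros Hd Hal Hbe Hx Hxy Hy Hl.
  assert (al * Kf x + be * nf d x - lam * mf d x < al * Kf y + be * nf d y - lam * mf d y).
  { apply (mvt_gt (fun t => al * Kf t + be * nf d t - lam * mf d t)
      (fun c => al * (-1/(c^2*sqrt(1-c^2))) + be * (-1/(c^2*(1+d*c))) - lam * (-(1-d^2)/((1+d*c)*(1-c^2))))
      x y Hxy).
    - intros c Hc. apply dh; auto; lra.
    - intros c Hc. rewrite hder_id by lra.
      pose proof (rho_decr d al be x c Hd Hal Hbe Hx ltac:(lra) ltac:(lra)).
      pose proof (mprime_neg d c Hd ltac:(lra)).
      assert (rho d al be c - lam < 0) by lra. nra. }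
  lra.
Qed.

Lemma dlnKm d lam c : -1 < d < 1 -> 0 < c < 1 ->
  derivable_pt_lim (fun t => ln (Kf t) - lam * mf d t) c
   (-1/(c*(1-c^2)) - lam * (-(1-d^2)/((1+d*c)*(1-c^2)))).
Proof.
  intros Hd Hc.
  apply (derivable_pt_lim_minus (fun t => ln (Kf t)) (fun t => lam * mf d t)).
  - apply dlnK; auto.
  - apply (derivable_pt_lim_scal (mf d) lam). apply dm; lra.
Qed.

Lemma lnKm_id d lam c : -1 < d < 1 -> 0 < c < 1 ->
  -1/(c*(1-c^2)) - lam * (-(1-d^2)/((1+d*c)*(1-c^2))) =
  (lam*(1-d^2)*c - (1+d*c)) / (c*(1+d*c)*(1-c^2)).
Proof. intros. field. neq0. Qed.

Lemma LTK d x y : -1 < d < 1 -> 0 < x -> x < y -> y < 1 ->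
  mf d x - mf d y < (1-d) * (ln (Kf x) - ln (Kf y)).
Proof.
  intros Hd Hx Hxy Hy.
  assert (ln (Kf y) - (1/(1-d)) * mf d y < ln (Kf x) - (1/(1-d)) * mf d x).
  { apply (mvt_lt (fun t => ln (Kf t) - (1/(1-d)) * mf d t)
      (fun c => -1/(c*(1-c^2)) - (1/(1-d)) * (-(1-d^2)/((1+d*c)*(1-c^2)))) x y Hxy).
    - intros c Hc. apply dlnKm; auto; lra.
    - intros c Hc. rewrite lnKm_id by lra.
      replace (1 / (1 - d) * (1 - d ^ 2) * c - (1 + d * c)) with (c - 1) by (field; lra).
      assert (0 < /(c*(1+d*c)*(1-c^2))) by (apply Rinv_0_lt_compat; apply Rmult_lt_0_compat; [apply Rmult_lt_0_compat|]; nra).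
      unfold Rdiv. nra. }
  assert ((1-d)*(ln (Kf x) - ln (Kf y)) - (mf d x - mf d y) =
    (1-d)*((ln (Kf x) - (1/(1-d)) * mf d x) - (ln (Kf y) - (1/(1-d)) * mf d y))) by (field; lra).
  assert (0 < (1-d)*((ln (Kf x) - (1/(1-d)) * mf d x) - (ln (Kf y) - (1/(1-d)) * mf d y))) by (apply Rmult_lt_0_compat; lra).
  lra.
Qed.

Lemma LTK_up d x y lam : -1 < d < 1 -> 0 < x -> x < y -> y < 1 ->
  (1/x + d) <= lam * (1 - d^2) ->
  ln (Kf x) - ln (Kf y) <= lam * (mf d x - mf d y).
Proof.
  intros Hd Hx Hxy Hy Hl.
  assert (ln (Kf x) - lam * mf d x <= ln (Kf y) - lam * mf d y).
  { apply (mvt_ge (fun t => ln (Kf t) - lam * mf d t)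
      (fun c => -1/(c*(1-c^2)) - lam * (-(1-d^2)/((1+d*c)*(1-c^2)))) x y Hxy).
    - intros c Hc. apply dlnKm; auto; lra.
    - intros c Hc. rewrite lnKm_id by lra.
      pose proof (inv_decr x c Hx ltac:(lra)).
      assert (1/c = /c) by (unfold Rdiv; ring).
      assert (c * (1/c) = 1) by (field; lra).
      assert (0 <= lam * (1 - d ^ 2) * c - (1 + d * c)) by nra.
      assert (0 < /(c*(1+d*c)*(1-c^2))) by (apply Rinv_0_lt_compat; apply Rmult_lt_0_compat; [apply Rmult_lt_0_compat|]; nra).
      unfold Rdiv. nra. }
  lra.
Qed.

Lemma IN d x y : -1 < d < 1 -> 0 < x -> x < y -> y < 1 ->
  nf d x - nf d y < (y/(1+d*y)) * (1/x^2 - 1/y^2).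
Proof.
  intros Hd Hx Hxy Hy.
  set (cst := y/(1+d*y)).
  assert (Hcst: 0 < cst) by (unfold cst; apply Rdiv_lt_0_compat; nra).
  assert (nf d x - cst * (1/x^2) < nf d y - cst * (1/y^2)).
  { apply (mvt_gt (fun t => nf d t - cst * (1/t^2))
      (fun c => -1/(c^2*(1+d*c)) - cst * (-2/c^3)) x y Hxy).
    - intros c Hc. apply (derivable_pt_lim_minus (nf d) (fun t => cst * (1/t^2))).
      + apply dn; lra.
      + apply (derivable_pt_lim_scal (fun t => 1/t^2) cst). apply dinvsq; lra.
    - intros c Hc.
      assert (0 < 1 + d*c) by nra.
      replace (-1/(c^2*(1+d*c)) - cst * (-2/c^3)) with ((2*y*(1+d*c) - c*(1+d*y))/(c^3*(1+d*c)*(1+d*y)))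
        by (unfold cst; field; neq0).
      assert (0 < y*(1+d*c)) by (apply Rmult_lt_0_compat; lra).
      assert (0 < c^3) by (apply pow_lt; lra).
      apply Rdiv_lt_0_compat; [lra|].
      apply Rmult_lt_0_compat; [apply Rmult_lt_0_compat|]; nra. }
  lra.
Qed.

Lemma Ksq t : 0 < t < 1 -> Kf t ^ 2 = 1/t^2 - 1.
Proof.
  intros. unfold Kf. assert (0 < 1 - t^2) by (apply sq_pos; auto).
  unfold Rdiv. rewrite Rpow_mult_distr, pow2_sqrt by lra. field. lra.
Qed.

Lemma KI d al1 al2 be u v : -1 < d < 1 -> 0 <= al1 -> 0 < be -> 0 < u -> u < v -> v < 1 ->
  al1 * Kf u + be * nf d u = al2 * Kf v + be * nf d v ->
  rho d al2 be v < rho d al1 be u.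
Proof.
  intros Hd Hal Hbe Hu Huv Hv Heq.
  unfold rho. apply Rmult_lt_compat_r; [apply Rinv_0_lt_compat; nra|].
  assert (Hal2 : al2 * Kf v = al1 * Kf u + be * (nf d u - nf d v)) by lra.
  replace (al2 * Kf v * (1/v + d)) with ((al1 * Kf u + be * (nf d u - nf d v)) * (1/v+d)) by (rewrite <- Hal2; ring).
  rewrite !Ksq by lra.
  pose proof (IN d u v Hd Hu Huv Hv).
  pose proof (inv_decr u v Hu Huv).
  pose proof (Kf_pos u (conj Hu (Rlt_trans _ _ _ Huv Hv))).
  assert (0 < 1 + d*v) by nra.
  assert (Hv1: (v / (1 + d*v)) * (1/v + d) = 1) by (field; neq0).
  assert ((nf d u - nf d v) * (1/v+d) < 1/u^2 - 1/v^2).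
  { assert (0 < 1/v + d) by (pose proof (inv_gt1 v (conj (Rlt_trans _ _ _ Hu Huv) Hv)); lra).
    assert (HH: (nf d u - nf d v)*(1/v+d) < (v/(1+d*v))*(1/u^2-1/v^2)*(1/v+d)) by (apply Rmult_lt_compat_r; auto).
    replace ((v/(1+d*v))*(1/u^2-1/v^2)*(1/v+d)) with (1/u^2-1/v^2) in HH by (field; neq0). exact HH. }
  assert (0 <= al1 * Kf u * (1/u - 1/v)) by (apply Rmult_le_pos; [apply Rmult_le_pos|]; lra).
  nra.
Qed.


Lemma cont_ex f x : ex_derive f x -> continuity_pt f x.
Proof. intros [l Hl]. apply is_derive_Reals in Hl. exact (derivable_continuous_pt f x (exist _ l Hl)). Qed.

Lemma cont_eps f x eps : continuity_pt f x -> 0 < eps ->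
  exists alp, 0 < alp /\ forall y, Rabs (y - x) < alp -> Rabs (f y - f x) < eps.
Proof.
  intros Hc He. destruct (Hc eps He) as [alp [Ha Hy]].
  exists alp; split; auto. intros y Hyx.
  destruct (Req_dec y x) as [->|Hne].
  - unfold Rminus. rewrite Rplus_opp_r, Rabs_R0. auto.
  - apply (Hy y). split; [split; [exact I | auto] | exact Hyx].
Qed.

Lemma one_cross (G : R -> R) a b : a < b ->
  (forall x, a <= x <= b -> continuity_pt G x) ->
  (forall z, a <= z <= b -> G z = 0 -> exists eps, 0 < eps /\
      (forall x, z < x < z + eps -> x <= b -> 0 < G x) /\
      (forall x, z - eps < x < z -> a <= x -> G x < 0)) ->
  G a = 0 -> G b = 0 -> False.
Proof.
  intros Hab Hc Hl Ha Hb.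
  destruct (Hl a ltac:(lra) Ha) as [e1 [He1 [Hr1 _]]].
  set (a0 := a + Rmin e1 (b - a) / 2).
  assert (Hm1: Rmin e1 (b-a) <= e1) by apply Rmin_l.
  assert (Hm2: Rmin e1 (b-a) <= b - a) by apply Rmin_r.
  assert (Hm3: 0 < Rmin e1 (b-a)) by (apply Rmin_glb_lt; lra).
  assert (Ha0: a < a0 < b) by (unfold a0; lra).
  assert (Ga0: 0 < G a0) by (apply Hr1; unfold a0; lra).
  set (E := fun x => a0 <= x <= b /\ forall y, a0 <= y <= x -> 0 < G y).
  assert (HbE: bound E) by (exists b; intros x [Hx _]; lra).
  assert (HnE: exists x, E x) by (exists a0; split; [lra| intros y Hy; replace y with a0 by lra; auto]).
  destruct (completeness E HbE HnE) as [s [Hs1 Hs2]].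
  assert (Hsa0: a0 <= s) by (apply Hs1; destruct HnE; unfold E; split; [lra| intros y Hy; replace y with a0 by lra; auto]).
  assert (Hsb: s <= b) by (apply Hs2; intros x [Hx _]; lra).
  assert (F1: forall y, a0 <= y < s -> 0 < G y).
  { intros y Hy. destruct (Rlt_dec 0 (G y)) as [P|P]; auto.
    exfalso. assert (s <= y); [|lra]. apply Hs2. intros x [Hx1 Hx2].
    destruct (Rle_dec x y) as [Q|Q]; auto. exfalso. apply P. apply Hx2. lra. }
  assert (F2: 0 <= G s).
  { destruct (Rle_dec 0 (G s)) as [P|P]; auto. exfalso.
    destruct (cont_eps G s (- G s) (Hc s ltac:(lra)) ltac:(lra)) as [eta [Heta Hy]].
    destruct (Req_dec s a0) as [E0|E0]. { rewrite E0 in P. lra. }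
    set (y := Rmax a0 (s - eta/2)).
    assert (a0 <= y < s) by (unfold y; split; [apply Rmax_l| apply Rmax_lub_lt; lra]).
    assert (Rabs (y - s) < eta).
    { assert (s - eta/2 <= y) by (unfold y; apply Rmax_r). apply Rabs_def1; lra. }
    specialize (Hy y H0). apply Rabs_def2 in Hy. pose proof (F1 y H). lra. }
  assert (F3: G s <= 0).
  { destruct (Rle_dec (G s) 0) as [P|P]; auto. exfalso.
    destruct (Req_dec s b) as [E0|E0]. { rewrite E0 in P. lra. }
    destruct (cont_eps G s (G s) (Hc s ltac:(lra)) ltac:(lra)) as [eta [Heta Hy]].
    set (x := Rmin b (s + eta/2)).
    assert (s < x <= b) by (unfold x; split; [apply Rmin_glb_lt; lra| apply Rmin_l]).
    assert (x <= s); [|lra]. apply Hs1. split; [lra|].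
    intros y Hy'. destruct (Rlt_dec y s) as [Q|Q]; [apply F1; lra|].
    assert (Rabs (y - s) < eta).
    { assert (x <= s + eta/2) by (unfold x; apply Rmin_r). apply Rabs_def1; lra. }
    specialize (Hy y H0). apply Rabs_def2 in Hy. lra. }
  assert (Gs: G s = 0) by lra.
  assert (Hsa: a0 < s) by (destruct (Req_dec s a0) as [E0|E0]; [rewrite E0 in Gs; lra| lra]).
  destruct (Hl s ltac:(lra) Gs) as [e2 [He2 [_ Hl2]]].
  set (y := Rmax a0 (s - e2/2)).
  assert (a0 <= y < s) by (unfold y; split; [apply Rmax_l| apply Rmax_lub_lt; lra]).
  assert (s - e2/2 <= y) by (unfold y; apply Rmax_r).
  pose proof (F1 y H). pose proof (Hl2 y ltac:(lra) ltac:(lra)). lra.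
Qed.

Lemma cont_lim f x l : derivable_pt_lim f x l -> continuity_pt f x.
Proof. intros H. exact (derivable_continuous_pt f x (exist _ l H)). Qed.

Lemma cont_mf d t : -1 < d < 1 -> -1 < t < 1 -> continuity_pt (mf d) t.
Proof. intros. eapply cont_lim. apply dm; auto. Qed.

Lemma cont_phi d al be t : -1 < d < 1 -> 0 < t < 1 -> continuity_pt (fun t => al * Kf t + be * nf d t) t.
Proof.
  intros. apply (continuity_pt_plus (fun t => al*Kf t) (fun t => be * nf d t)).
  - apply (continuity_pt_scal Kf). eapply cont_lim. apply dK; auto.
  - apply (continuity_pt_scal (nf d)). eapply cont_lim. apply dn; auto.
Qed.

Lemma cont_rho d al be t : -1 < d < 1 -> 0 < t < 1 -> continuity_pt (rho d al be) t.
Proof.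
  intros Hd Ht. apply cont_ex. unfold rho, Kf.
  assert (0 < 1 - t^2) by (apply sq_pos; auto).
  auto_derive. sidec.
Qed.

Definition Tf d C u := epsilon (inhabits 0) (fun v => 0 < v < 1 /\ mf d v = mf d u - C).

Lemma mf_inj d x y : -1 < d < 1 -> -1 < x < 1 -> -1 < y < 1 -> mf d x = mf d y -> x = y.
Proof.
  intros Hd Hx Hy E. destruct (Rtotal_order x y) as [H|[H|H]]; auto.
  - pose proof (mf_decr d x y Hd ltac:(lra) H ltac:(lra)). lra.
  - pose proof (mf_decr d y x Hd ltac:(lra) H ltac:(lra)). lra.
Qed.

Definition Md d := ln 2 - ln (1 - Rabs d).

Lemma mf_bound d t : -1 < d < 1 -> 0 <= t < 1 -> mf d t <= Md d + (1-d)/2 * ln (1-t).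
Proof.
  intros Hd Ht. unfold mf, Md.
  assert (0 <= ln (1+t)) by (rewrite <- ln_1; apply ln_le; lra).
  assert (0 <= (1+d)/2 * ln (1+t)) by (apply Rmult_le_pos; lra).
  assert (0 < 1 - Rabs d) by (unfold Rabs; destruct (Rcase_abs d); lra).
  assert (ln (1 - Rabs d) <= 0) by (rewrite <- ln_1; apply ln_le; [lra| pose proof (Rabs_pos d); lra]).
  assert (0 <= ln 2) by (rewrite <- ln_1; apply ln_le; lra).
  assert (d * ln (1 + d*t) <= ln 2 - ln (1 - Rabs d)).
  { destruct (Rle_dec 0 d) as [P|P].
    - rewrite Rabs_right in * by lra.
      assert (0 <= ln (1+d*t)) by (rewrite <- ln_1; apply ln_le; nra).
      assert (ln (1+d*t) <= ln 2) by (apply ln_le; nra).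
      assert (0 <= (1-d) * ln (1+d*t)) by (apply Rmult_le_pos; lra).
      nra.
    - rewrite Rabs_left in * by lra.
      assert (ln (1+d*t) <= 0) by (rewrite <- ln_1; apply ln_le; nra).
      assert (ln (1 - -d) <= ln (1+d*t)) by (apply ln_le; nra).
      assert (0 <= (1+d) * (- ln (1+d*t))) by (apply Rmult_le_pos; lra).
      nra. }
  lra.
Qed.

Lemma mf_small d X u : -1 < d < 1 -> 0 <= u < 1 -> exists t, u < t < 1 /\ mf d t < X.
Proof.
  intros Hd Hu.
  set (e := Rmin ((1-u)/2) (exp (2*(X - 1 - Md d)/(1-d)))).
  assert (He: 0 < e) by (apply Rmin_glb_lt; [lra| apply exp_pos]).
  assert (He1: e <= (1-u)/2) by apply Rmin_l.
  assert (He2: e <= exp (2*(X - 1 - Md d)/(1-d))) by apply Rmin_r.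
  exists (1 - e). split; [lra|].
  pose proof (mf_bound d (1-e) Hd ltac:(lra)).
  replace (1 - (1 - e)) with e in H by ring.
  assert (ln e <= 2*(X - 1 - Md d)/(1-d)).
  { rewrite <- (ln_exp (2*(X - 1 - Md d)/(1-d))). destruct He2 as [P|P].
    - left. apply ln_increasing; auto.
    - rewrite P. lra. }
  assert ((1-d)/2 * ln e <= (1-d)/2 * (2*(X - 1 - Md d)/(1-d))) by (apply Rmult_le_compat_l; lra).
  replace ((1-d)/2 * (2*(X - 1 - Md d)/(1-d))) with (X - 1 - Md d) in H1 by (field; lra).
  lra.
Qed.

Lemma Tf_ex d C u : -1 < d < 1 -> 0 < C -> 0 < u < 1 -> exists v, u < v < 1 /\ mf d v = mf d u - C.
Proof.
  intros Hd HC Hu.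
  destruct (mf_small d (mf d u - C) u Hd ltac:(lra)) as [t [Ht1 Ht2]].
  destruct (IVT_interv (fun s => (mf d u - C) - mf d s) u t) as [v [Hv1 Hv2]].
  - intros a Ha. apply (continuity_pt_minus (fun _ => mf d u - C) (mf d)).
    + apply continuity_pt_const. intros x y. reflexivity.
    + apply cont_mf; lra.
  - lra.
  - lra.
  - lra.
  - exists v. assert (v <> u) by (intro; subst; lra). split; [lra|lra].
Qed.

Lemma Tf_prop d C u : -1 < d < 1 -> 0 < C -> 0 < u < 1 ->
  u < Tf d C u < 1 /\ mf d (Tf d C u) = mf d u - C.
Proof.
  intros Hd HC Hu.
  destruct (Tf_ex d C u Hd HC Hu) as [v [Hv1 Hv2]].
  assert (P: 0 < Tf d C u < 1 /\ mf d (Tf d C u) = mf d u - C).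
  { unfold Tf. apply epsilon_spec. exists v. split; [lra|auto]. }
  destruct P as [P1 P2]. split; [|auto]. split; [|lra].
  destruct (Rle_dec (Tf d C u) u) as [Q|Q]; [|lra].
  destruct Q as [Q|Q].
  - pose proof (mf_decr d (Tf d C u) u Hd ltac:(lra) Q ltac:(lra)). lra.
  - rewrite Q in P2. lra.
Qed.

Lemma Tf_eq d C u v : -1 < d < 1 -> 0 < C -> 0 < u < 1 -> 0 < v < 1 -> mf d v = mf d u - C -> Tf d C u = v.
Proof.
  intros. destruct (Tf_prop d C u) as [P1 P2]; auto.
  apply (mf_inj d); auto; lra.
Qed.

Lemma mf_le d x y : -1 < d < 1 -> -1 < x -> x <= y -> y < 1 -> mf d y <= mf d x.
Proof. intros. destruct H1 as [H1|H1]; [left; apply mf_decr; auto| subst; lra]. Qed.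

Lemma Tf_cont d C z : -1 < d < 1 -> 0 < C -> 0 < z < 1 -> continuity_pt (Tf d C) z.
Proof.
  intros Hd HC Hz.
  unfold continuity_pt, continue_in, limit1_in, limit_in. simpl. unfold R_dist.
  intros eps Heps.
  destruct (Tf_prop d C z Hd HC Hz) as [Hv0 Hmv0].
  set (v0 := Tf d C z) in *.
  set (e := Rmin eps (Rmin ((1-v0)/2) (v0/2))).
  assert (He: 0 < e) by (apply Rmin_glb_lt; [lra| apply Rmin_glb_lt; lra]).
  assert (He1: e <= eps) by apply Rmin_l.
  assert (He2: e <= (1-v0)/2) by (eapply Rle_trans; [apply Rmin_r| apply Rmin_l]).
  assert (He3: e <= v0/2) by (eapply Rle_trans; [apply Rmin_r| apply Rmin_r]).
  set (g1 := mf d (v0 - e) - mf d v0).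
  set (g2 := mf d v0 - mf d (v0 + e)).
  assert (Hg1: 0 < g1) by (unfold g1; pose proof (mf_decr d (v0-e) v0 Hd ltac:(lra) ltac:(lra) ltac:(lra)); lra).
  assert (Hg2: 0 < g2) by (unfold g2; pose proof (mf_decr d v0 (v0+e) Hd ltac:(lra) ltac:(lra) ltac:(lra)); lra).
  destruct (cont_eps (mf d) z (Rmin g1 g2) (cont_mf d z Hd ltac:(lra)) ltac:(apply Rmin_glb_lt; lra)) as [alp1 [Ha1 Hy]].
  exists (Rmin alp1 (Rmin (z/2) ((1-z)/2))). split.
  { apply Rmin_glb_lt; [lra| apply Rmin_glb_lt; lra]. }
  intros x [_ Hx].
  assert (Hx1: Rabs (x - z) < alp1) by (eapply Rlt_le_trans; [exact Hx| apply Rmin_l]).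
  assert (Hx2: Rabs (x - z) < z/2) by (eapply Rlt_le_trans; [exact Hx| eapply Rle_trans; [apply Rmin_r| apply Rmin_l]]).
  assert (Hx3: Rabs (x - z) < (1-z)/2) by (eapply Rlt_le_trans; [exact Hx| eapply Rle_trans; [apply Rmin_r| apply Rmin_r]]).
  apply Rabs_def2 in Hx2. apply Rabs_def2 in Hx3.
  specialize (Hy x Hx1). apply Rabs_def2 in Hy.
  pose proof (Rmin_l g1 g2). pose proof (Rmin_r g1 g2).
  destruct (Tf_prop d C x Hd HC ltac:(lra)) as [Hvx Hmvx].
  apply Rabs_def1.
  - destruct (Rlt_dec (Tf d C x - v0) e) as [P|P]; [lra|exfalso].
    pose proof (mf_le d (v0 + e) (Tf d C x) Hd ltac:(lra) ltac:(lra) ltac:(lra)). unfold g2 in *. lra.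
  - destruct (Rlt_dec (-e) (Tf d C x - v0)) as [P|P]; [lra|exfalso].
    pose proof (mf_le d (Tf d C x) (v0 - e) Hd ltac:(lra) ltac:(lra) ltac:(lra)). unfold g1 in *. lra.
Qed.

Definition phi d al be t := al * Kf t + be * nf d t.
Definition Gf d C al1 al2 be u := phi d al2 be (Tf d C u) - phi d al1 be u.

Lemma mf_lt_inv d x y : -1 < d < 1 -> -1 < x < 1 -> -1 < y < 1 -> mf d x < mf d y -> y < x.
Proof.
  intros. destruct (Rtotal_order x y) as [P|[P|P]]; auto.
  - pose proof (mf_decr d x y H ltac:(lra) P ltac:(lra)). lra.
  - subst. lra.
Qed.

Lemma Gf_cont d C al1 al2 be z : -1 < d < 1 -> 0 < C -> 0 < z < 1 -> continuity_pt (Gf d C al1 al2 be) z.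
Proof.
  intros Hd HC Hz. unfold Gf.
  apply (continuity_pt_minus (fun u => phi d al2 be (Tf d C u)) (phi d al1 be)).
  - apply (continuity_pt_comp (Tf d C) (phi d al2 be)).
    + apply Tf_cont; auto.
    + destruct (Tf_prop d C z Hd HC Hz). apply cont_phi; auto; lra.
  - apply cont_phi; auto.
Qed.

Lemma Gf_local d C al1 al2 be z : -1 < d < 1 -> 0 < C -> 0 <= al1 -> 0 <= al2 -> 0 < be -> 0 < z < 1 ->
  Gf d C al1 al2 be z = 0 -> exists eps, 0 < eps /\
      (forall x, z < x < z + eps -> 0 < Gf d C al1 al2 be x) /\
      (forall x, z - eps < x < z -> 0 < x -> Gf d C al1 al2 be x < 0).
Proof.
  intros Hd HC Ha1 Ha2 Hbe Hz HG.
  destruct (Tf_prop d C z Hd HC Hz) as [Hv0 Hmv0].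
  set (v0 := Tf d C z) in *.
  assert (Heq: al1 * Kf z + be * nf d z = al2 * Kf v0 + be * nf d v0).
  { unfold Gf, phi in HG. fold v0 in HG. lra. }
  pose proof (KI d al1 al2 be z v0 Hd Ha1 Hbe ltac:(lra) ltac:(lra) ltac:(lra) Heq) as Hrho.
  set (gap := rho d al1 be z - rho d al2 be v0).
  destruct (cont_eps (rho d al1 be) z gap (cont_rho d al1 be z Hd Hz) ltac:(unfold gap; lra)) as [e1 [He1 Hy1]].
  assert (Hc2: continuity_pt (fun u => rho d al2 be (Tf d C u)) z).
  { apply (continuity_pt_comp (Tf d C) (rho d al2 be)). apply Tf_cont; auto. apply cont_rho; auto; fold v0; split; lra. }
  destruct (cont_eps _ z gap Hc2 ltac:(unfold gap; lra)) as [e2 [He2 Hy2]].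
  exists (Rmin (Rmin e1 e2) (Rmin z (1 - z))). split.
  { apply Rmin_glb_lt; apply Rmin_glb_lt; lra. }
  pose proof (Rmin_l (Rmin e1 e2) (Rmin z (1 - z))). pose proof (Rmin_r (Rmin e1 e2) (Rmin z (1 - z))).
  pose proof (Rmin_l e1 e2). pose proof (Rmin_r e1 e2). pose proof (Rmin_l z (1-z)). pose proof (Rmin_r z (1-z)).
  set (m0 := Rmin (Rmin e1 e2) (Rmin z (1 - z))) in *.
  split.
  - intros x Hx.
    assert (Hx01: 0 < x < 1) by lra.
    destruct (Tf_prop d C x Hd HC Hx01) as [Hv Hmv].
    set (v := Tf d C x) in *.
    assert (Hmx: mf d x < mf d z) by (apply mf_decr; lra).
    assert (Hvv: v0 < v) by (apply (mf_lt_inv d); lra).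
    assert (Hr: rho d al2 be v0 <= rho d al1 be x).
    { assert (Rabs (x - z) < e1) by (apply Rabs_def1; lra).
      specialize (Hy1 x H5). apply Rabs_def2 in Hy1. unfold gap in Hy1. lra. }
    pose proof (LT_a d al1 be z x (rho d al2 be v0) Hd Ha1 Hbe ltac:(lra) ltac:(lra) ltac:(lra) Hr).
    pose proof (LT_b d al2 be v0 v (rho d al2 be v0) Hd Ha2 Hbe ltac:(lra) ltac:(lra) ltac:(lra) ltac:(lra)).
    unfold Gf, phi. fold v. 
    assert (mf d v0 - mf d v = mf d z - mf d x) by lra.
    rewrite H7 in H6. lra.
  - intros x Hx Hx0.
    assert (Hx01: 0 < x < 1) by lra.
    destruct (Tf_prop d C x Hd HC Hx01) as [Hv Hmv].
    set (v := Tf d C x) in *.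
    assert (Hmx: mf d z < mf d x) by (apply mf_decr; lra).
    assert (Hvv: v < v0) by (apply (mf_lt_inv d); lra).
    assert (Hr: rho d al2 be v <= rho d al1 be z).
    { assert (Rabs (x - z) < e2) by (apply Rabs_def1; lra).
      specialize (Hy2 x H5). apply Rabs_def2 in Hy2. fold v in Hy2. fold v0 in Hy2. unfold gap in Hy2. lra. }
    pose proof (LT_a d al1 be x z (rho d al1 be z) Hd Ha1 Hbe ltac:(lra) ltac:(lra) ltac:(lra) ltac:(lra)).
    pose proof (LT_b d al2 be v v0 (rho d al1 be z) Hd Ha2 Hbe ltac:(lra) ltac:(lra) ltac:(lra) Hr).
    unfold Gf, phi. fold v.
    assert (mf d v - mf d v0 = mf d x - mf d z) by lra.
    rewrite H7 in H6. lra.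
Qed.

Lemma GU d C al1 al2 be u1 v1 u2 v2 : -1 < d < 1 -> 0 < C -> 0 <= al1 -> 0 <= al2 -> 0 < be ->
  0 < u1 -> u1 < v1 -> v1 < 1 -> 0 < u2 -> u2 < v2 -> v2 < 1 ->
  mf d u1 - mf d v1 = C -> mf d u2 - mf d v2 = C ->
  phi d al1 be u1 = phi d al2 be v1 -> phi d al1 be u2 = phi d al2 be v2 ->
  u1 = u2 /\ v1 = v2.
Proof.
  intros Hd HC Ha1 Ha2 Hbe Hu1 Huv1 Hv1 Hu2 Huv2 Hv2 Hm1 Hm2 Hp1 Hp2.
  assert (T1: Tf d C u1 = v1) by (apply Tf_eq; auto; lra).
  assert (T2: Tf d C u2 = v2) by (apply Tf_eq; auto; lra).
  assert (G1: Gf d C al1 al2 be u1 = 0) by (unfold Gf; rewrite T1; lra).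
  assert (G2: Gf d C al1 al2 be u2 = 0) by (unfold Gf; rewrite T2; lra).
  assert (Hgen: forall a b, 0 < a -> a < b -> b < 1 -> Gf d C al1 al2 be a = 0 -> Gf d C al1 al2 be b = 0 -> False).
  { intros a b Ha Hab Hb Ga Gb.
    apply (one_cross (Gf d C al1 al2 be) a b Hab); auto.
    - intros x Hx. apply Gf_cont; auto; lra.
    - intros z Hz Gz. destruct (Gf_local d C al1 al2 be z Hd HC Ha1 Ha2 Hbe ltac:(lra) Gz) as [e [He [P1 P2]]].
      exists e. split; auto. split.
      + intros x Hx _. apply P1; lra.
      + intros x Hx Hax. apply P2; lra. }
  destruct (Rtotal_order u1 u2) as [P|[P|P]].
  - exfalso. apply (Hgen u1 u2); auto; lra.
  - subst u2. split; [reflexivity|]. rewrite <- T1, <- T2; reflexivity.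
  - exfalso. apply (Hgen u2 u1); auto; lra.
Qed.

Lemma Kf_lower u : 0 < u <= 1/2 -> 1/(2*u) <= Kf u.
Proof.
  intros Hu. unfold Kf.
  assert (1/2 <= sqrt (1 - u^2)).
  { rewrite <- (sqrt_pow2 (1/2)) by lra. apply sqrt_le_1_alt. nra. }
  apply Rmult_le_reg_r with (2*u); [lra|].
  field_simplify; [|lra|lra]. lra.
Qed.

Lemma Kf_upper u : 1/2 <= u < 1 -> Kf u <= 2 * sqrt (1 - u^2).
Proof.
  intros Hu. unfold Kf.
  assert (0 <= sqrt (1 - u^2)) by apply sqrt_pos.
  apply Rmult_le_reg_r with u; [lra|].
  field_simplify; [|lra]. nra.
Qed.

Lemma mf0 d : mf d 0 = 0.
Proof. unfold mf. rewrite Rmult_0_r, Rplus_0_r, Rminus_0_r, ln_1. ring. Qed.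

Lemma w0_ex d C : -1 < d < 1 -> 0 < C -> exists w0, 0 < w0 < 1 /\ -C < mf d w0.
Proof.
  intros Hd HC.
  destruct (cont_eps (mf d) 0 C (cont_mf d 0 Hd ltac:(lra)) HC) as [e [He Hy]].
  exists (Rmin (e/2) (1/2)).
  pose proof (Rmin_l (e/2) (1/2)). pose proof (Rmin_r (e/2) (1/2)).
  assert (0 < Rmin (e/2) (1/2)) by (apply Rmin_glb_lt; lra).
  split; [lra|].
  assert (Rabs (Rmin (e/2) (1/2) - 0) < e) by (apply Rabs_def1; lra).
  specialize (Hy _ H2). rewrite mf0 in Hy. apply Rabs_def2 in Hy. lra.
Qed.

Lemma G_lo d C al1 al2 be : -1 < d < 1 -> 0 < C -> 0 < al1 -> 0 < al2 -> 0 < be ->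
  exists u, 0 < u <= 1/4 /\ Gf d C al1 al2 be u < 0.
Proof.
  intros Hd HC Ha1 Ha2 Hbe.
  destruct (w0_ex d C Hd HC) as [w0 [Hw0 Hmw0]].
  pose proof (Kf_pos w0 Hw0) as HKw.
  set (u := Rmin (1/4) (al1/(2*al2*Kf w0))).
  assert (Hu0: 0 < u) by (apply Rmin_glb_lt; [lra| apply Rdiv_lt_0_compat; [lra| apply Rmult_lt_0_compat; lra]]).
  assert (Hu1: u <= 1/4) by apply Rmin_l.
  assert (Hu2: u <= al1/(2*al2*Kf w0)) by apply Rmin_r.
  exists u. split; [lra|].
  destruct (Tf_prop d C u Hd HC ltac:(lra)) as [Hv Hmv].
  set (v := Tf d C u) in *.
  assert (mf d u < 0) by (rewrite <- (mf0 d); apply mf_decr; lra).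
  assert (Hwv: w0 < v) by (apply (mf_lt_inv d); lra).
  pose proof (Kf_decr w0 v ltac:(lra) Hwv ltac:(lra)).
  pose proof (nf_decr d u v Hd ltac:(lra) ltac:(lra) ltac:(lra)).
  pose proof (Kf_lower u ltac:(lra)).
  assert (al2 * Kf w0 <= al1 * Kf u).
  { assert (al1/(2*u) <= al1 * Kf u) by (unfold Rdiv; rewrite Rmult_1_l in H1 || idtac;
      replace (al1/(2*u)) with (al1 * (1/(2*u))) by (field; lra); apply Rmult_le_compat_l; lra).
    assert (al2 * Kf w0 <= al1/(2*u)).
    { apply Rmult_le_reg_r with (2*u); [lra|].
      replace (al1/(2*u) * (2*u)) with al1 by (field; lra).
      apply Rmult_le_reg_r with (/(2*al2*Kf w0)). apply Rinv_0_lt_compat; apply Rmult_lt_0_compat; lra.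
      replace (al2 * Kf w0 * (2*u) * /(2*al2*Kf w0)) with u by (field; lra).
      exact Hu2. }
    lra. }
  unfold Gf, phi. fold v.
  assert (al2 * Kf v < al2 * Kf w0) by (apply Rmult_lt_compat_l; lra).
  assert (be * nf d v < be * nf d u) by (apply Rmult_lt_compat_l; lra).
  lra.
Qed.

Lemma G_hi d C al1 al2 be : -1 < d < 1 -> 0 < C -> 0 < al1 -> 0 < al2 -> 0 < be ->
  C < (1-d) * ln (al2/al1) ->
  exists u, 1/2 <= u < 1 /\ 0 < Gf d C al1 al2 be u.
Proof.
  intros Hd HC Ha1 Ha2 Hbe Hlt.
  set (gam := ln (al2/al1) - C/(1-d)).
  assert (Hgam: 0 < gam).
  { unfold gam. apply Rmult_lt_reg_l with (1-d); [lra|].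
    replace ((1-d) * (ln (al2/al1) - C/(1-d))) with ((1-d)*ln (al2/al1) - C) by (field; lra). lra. }
  set (th := exp (- gam/2)).
  assert (Hth0: 0 < th) by apply exp_pos.
  assert (Hth1: th < 1) by (unfold th; rewrite <- exp_0; apply exp_increasing; lra).
  set (k0 := al1 * (1 - th) * (1 - d^2) / (be * C)).
  assert (Hk0: 0 < k0) by (unfold k0; apply Rdiv_lt_0_compat; [apply Rmult_lt_0_compat; [apply Rmult_lt_0_compat|]; nra| apply Rmult_lt_0_compat; lra]).
  set (g := gam * (1 - d^2) / (2*C)).
  assert (Hg: 0 < g) by (unfold g; apply Rdiv_lt_0_compat; [apply Rmult_lt_0_compat; nra| lra]).
  set (e := Rmin (1/2) (Rmin (g/(1+g)) (k0^2/8))).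
  assert (He0: 0 < e) by (apply Rmin_glb_lt; [lra| apply Rmin_glb_lt; [apply Rdiv_lt_0_compat; lra| nra]]).
  assert (He1: e <= 1/2) by apply Rmin_l.
  assert (He2: e <= g/(1+g)) by (eapply Rle_trans; [apply Rmin_r| apply Rmin_l]).
  assert (He3: e <= k0^2/8) by (eapply Rle_trans; [apply Rmin_r| apply Rmin_r]).
  set (u := 1 - e).
  exists u. split; [unfold u; lra|].
  assert (Hu: 0 < u < 1) by (unfold u; lra).
  destruct (Tf_prop d C u Hd HC Hu) as [Hv Hmv].
  set (v := Tf d C u) in *.
  set (lam := 1/(1-d) + gam/(2*C)).
  assert (Hinvu: 1/u <= 1 + g).
  { apply Rmult_le_reg_r with u; [lra|]. replace (1/u*u) with 1 by (field; lra).
    assert (e * (1+g) <= g) by (apply Rmult_le_reg_r with (/(1+g)); [apply Rinv_0_lt_compat; lra|];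
      replace (g */(1+g)) with (g/(1+g)) by (unfold Rdiv; ring);
      replace (e*(1+g)*/(1+g)) with e by (field; lra); lra).
    unfold u. nra. }
  assert (Hlam: 1/u + d <= lam * (1 - d^2)).
  { unfold lam. replace ((1/(1-d) + gam/(2*C)) * (1-d^2)) with (1 + d + g) by (unfold g; field; lra). lra. }
  pose proof (LTK_up d u v lam Hd ltac:(lra) ltac:(lra) ltac:(lra) Hlam) as HK.
  assert (HKr: ln (Kf u) - ln (Kf v) <= ln (al2/al1) - gam/2).
  { replace (mf d u - mf d v) with C in HK by lra.
    replace (lam * C) with (C/(1-d) + gam/2) in HK by (unfold lam; field; lra). unfold gam in *. lra. }
  pose proof (Kf_pos u Hu) as HKu. pose proof (Kf_pos v ltac:(lra)) as HKv.
  assert (HK1: al1 * Kf u <= al2 * Kf v * th).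
  { assert (ln (al1 * Kf u) <= ln (al2 * Kf v * th)).
    { rewrite (ln_mult al1 (Kf u)) by lra.
      rewrite (ln_mult (al2 * Kf v) th) by (try apply Rmult_lt_0_compat; lra).
      rewrite (ln_mult al2 (Kf v)) by lra.
      unfold th. rewrite ln_exp. rewrite ln_div in HKr by lra. lra. }
    destruct (Rle_dec (al1 * Kf u) (al2 * Kf v * th)) as [P|P]; auto.
    exfalso. assert (al2 * Kf v * th < al1 * Kf u) by lra.
    apply ln_increasing in H0; [lra|]. apply Rmult_lt_0_compat; [apply Rmult_lt_0_compat|]; auto. }
  assert (HKu2: Kf u <= k0).
  { pose proof (Kf_upper u ltac:(unfold u; lra)).
    assert (sqrt (1 - u^2) <= k0/2).
    { rewrite <- (sqrt_pow2 (k0/2)) by lra. apply sqrt_le_1_alt. unfold u. nra. }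
    lra. }
  pose proof (LT_b d 0 1 u v (rho d 0 1 u) Hd ltac:(lra) ltac:(lra) ltac:(lra) ltac:(lra) ltac:(lra) (Rle_refl _)) as Hn.
  replace (mf d u - mf d v) with C in Hn by lra.
  unfold rho in Hn.
  assert (Hn2: nf d u - nf d v < Kf u ^ 2 / (1 - d^2) * C).
  { replace (0 * Kf u * (1/u + d) + 1 * Kf u ^2) with (Kf u ^ 2) in Hn by ring. lra. }
  assert (HKK: be * (Kf u ^ 2 / (1 - d^2) * C) <= (1 - th) * (al1 * Kf u)).
  { replace (be * (Kf u ^ 2 / (1 - d^2) * C)) with (Kf u * (be * C / (1-d^2)) * Kf u) by (field; nra).
    assert (Kf u * (be * C / (1-d^2)) <= al1 * (1 - th)).
    { apply Rmult_le_reg_r with ((1-d^2)/(be*C)). apply Rdiv_lt_0_compat; [nra| apply Rmult_lt_0_compat; lra].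
      replace (Kf u * (be * C / (1 - d ^ 2)) * ((1 - d ^ 2) / (be * C))) with (Kf u) by (field; split; nra).
      unfold k0 in HKu2. replace (al1 * (1 - th) * ((1 - d ^ 2) / (be * C))) with (al1 * (1 - th) * (1 - d ^ 2) / (be * C)) by (field; split; nra). lra. }
    assert (Kf u * (be * C / (1-d^2)) * Kf u <= al1 * (1 - th) * Kf u) by (apply Rmult_le_compat_r; lra).
    nra. }
  unfold Gf, phi. fold v.
  assert (be * (nf d u - nf d v) < be * (Kf u ^ 2 / (1 - d^2) * C)) by (apply Rmult_lt_compat_l; auto).
  assert ((1 - th) * (al1 * Kf u) <= (1 - th) * (al2 * Kf v * th)) by (apply Rmult_le_compat_l; lra).
  assert (0 <= al2 * Kf v * (1-th)^2) by (apply Rmult_le_pos; [apply Rmult_le_pos; lra| apply pow2_ge_0]).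
  lra.
Qed.

Lemma GE d C al1 al2 be : -1 < d < 1 -> 0 < C -> 0 < al1 -> 0 < al2 -> 0 < be ->
  C < (1-d) * ln (al2/al1) ->
  exists u v, 0 < u /\ u < v /\ v < 1 /\ mf d u - mf d v = C /\ phi d al1 be u = phi d al2 be v.
Proof.
  intros Hd HC Ha1 Ha2 Hbe Hlt.
  destruct (G_lo d C al1 al2 be Hd HC Ha1 Ha2 Hbe) as [u1 [Hu1 G1]].
  destruct (G_hi d C al1 al2 be Hd HC Ha1 Ha2 Hbe Hlt) as [u2 [Hu2 G2]].
  destruct (IVT_interv (Gf d C al1 al2 be) u1 u2) as [z [Hz Gz]].
  - intros a Ha. apply Gf_cont; auto; lra.
  - lra.
  - auto.
  - auto.
  - destruct (Tf_prop d C z Hd HC ltac:(lra)) as [Hv Hmv].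
    exists z, (Tf d C z). repeat split; try lra.
    unfold Gf in Gz. lra.
Qed.

Lemma ln_sqrt' x : 0 < x -> ln (sqrt x) = ln x / 2.
Proof.
  intros. assert (0 < sqrt x) by (apply sqrt_lt_R0; auto).
  assert (ln x = ln (sqrt x * sqrt x)) by (rewrite sqrt_sqrt; lra).
  rewrite ln_mult in H1 by auto. lra.
Qed.

Lemma lnK_eq t : 0 < t < 1 -> ln (Kf t) = (ln (1-t) + ln (1+t))/2 - ln t.
Proof.
  intros. unfold Kf. rewrite ln_div by (try apply sqrt_lt_R0; nra).
  replace (1 - t^2) with ((1-t)*(1+t)) by ring.
  rewrite ln_sqrt' by nra. rewrite ln_mult by lra. lra.
Qed.

Lemma Sa_eq Q a : 0 < Q -> 0 < a < 1 -> sqrt (Q^2 + (Q * Kf a)^2) = Q / a.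
Proof.
  intros HQ Ha. unfold Kf.
  replace (Q^2 + (Q * (sqrt (1 - a^2)/a))^2) with ((Q/a)^2).
  - apply sqrt_pow2. apply Rlt_le, Rdiv_lt_0_compat; lra.
  - unfold Rdiv. rewrite !Rpow_mult_distr, pow2_sqrt by nra. field. lra.
Qed.

Lemma a_props Q A : 0 < Q -> 0 < A ->
  0 < Q / sqrt (Q^2 + A^2) < 1 /\ A = Q * Kf (Q / sqrt (Q^2 + A^2)).
Proof.
  intros HQ HA.
  set (S := sqrt (Q^2 + A^2)).
  assert (HS2: S^2 = Q^2 + A^2) by (unfold S; apply pow2_sqrt; nra).
  assert (HS: 0 < S) by (unfold S; apply sqrt_lt_R0; nra).
  assert (HQS: Q < S) by nra.
  split.
  - split; [apply Rdiv_lt_0_compat; lra|]. apply Rmult_lt_reg_r with S; auto. field_simplify; lra.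
  - unfold Kf.
    assert (E: 1 - (Q/S)^2 = (A/S)^2).
    { replace ((Q/S)^2) with (Q^2/S^2) by (field; lra). replace ((A/S)^2) with (A^2/S^2) by (field; lra).
      rewrite HS2. field. nra. }
    rewrite E, sqrt_pow2 by (apply Rlt_le, Rdiv_lt_0_compat; lra).
    field. lra.
Qed.

Lemma core_G1 l r al be Q A d a b : 0 < l -> 0 < r -> 0 < Q -> -1 < d < 1 -> 0 < a < 1 -> 0 < b < 1 ->
  A = Q * Kf a -> PNP_B l r al be A = Q * Kf b ->
  PNP_G1 l r al be Q A d = d * ln (l / r) + mf d a - mf d b.
Proof.
  intros Hl Hr HQ Hd Ha Hb EA EB.
  unfold PNP_G1, PNP_Sb, PNP_Sa. rewrite EB. rewrite EA. rewrite !Sa_eq by auto.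
  pose proof (Kf_pos a Ha). pose proof (Kf_pos b Hb).
  assert (E1: ln ((Q/a + d*Q)/(Q/b + d*Q)) = ln (1+d*a) - ln a - ln (1+d*b) + ln b).
  { replace (Q/a + d*Q) with (Q * ((1+d*a)/a)) by (field; lra).
    replace (Q/b + d*Q) with (Q * ((1+d*b)/b)) by (field; lra).
    assert (0 < (1+d*a)/a) by (apply Rdiv_lt_0_compat; nra).
    assert (0 < (1+d*b)/b) by (apply Rdiv_lt_0_compat; nra).
    rewrite ln_div by (apply Rmult_lt_0_compat; auto).
    rewrite !ln_mult by auto. rewrite !ln_div by nra. lra. }
  assert (E2: ln (Q * Kf a / (Q * Kf b)) = ln (Kf a) - ln (Kf b)).
  { replace (Q * Kf a / (Q * Kf b)) with (Kf a / Kf b) by (field; lra). rewrite ln_div; auto. }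
  assert (E3: ln ((Q/a - Q)/(Q/b - Q)) = ln (1-a) - ln a - ln (1-b) + ln b).
  { replace (Q/a - Q) with (Q * ((1-a)/a)) by (field; lra).
    replace (Q/b - Q) with (Q * ((1-b)/b)) by (field; lra).
    assert (0 < (1-a)/a) by (apply Rdiv_lt_0_compat; nra).
    assert (0 < (1-b)/b) by (apply Rdiv_lt_0_compat; nra).
    rewrite ln_div by (apply Rmult_lt_0_compat; auto).
    rewrite !ln_mult by auto. rewrite !ln_div by nra. lra. }
  rewrite E1, E2, E3, !lnK_eq by auto. unfold mf. field.
Qed.

Lemma core_G2 l r al be Q A d a b : 0 < Q -> -1 < d < 1 -> 0 < a < 1 -> 0 < b < 1 ->
  A = Q * Kf a -> PNP_B l r al be A = Q * Kf b ->
  PNP_G2 l r al be Q A d = l - A - Q * (nf d a - nf d b).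
Proof.
  intros HQ Hd Ha Hb EA EB.
  unfold PNP_G2, PNP_N, PNP_Sb, PNP_Sa. rewrite EB. rewrite EA. rewrite !Sa_eq by auto.
  assert (E1: ln ((Q/a + d*Q)/(Q/b + d*Q)) = ln (1+d*a) - ln a - ln (1+d*b) + ln b).
  { replace (Q/a + d*Q) with (Q * ((1+d*a)/a)) by (field; lra).
    replace (Q/b + d*Q) with (Q * ((1+d*b)/b)) by (field; lra).
    assert (0 < (1+d*a)/a) by (apply Rdiv_lt_0_compat; nra).
    assert (0 < (1+d*b)/b) by (apply Rdiv_lt_0_compat; nra).
    rewrite ln_div by (apply Rmult_lt_0_compat; auto).
    rewrite !ln_mult by auto. rewrite !ln_div by nra. lra. }
  rewrite E1. unfold nf. rewrite !ln_div by nra. field. lra.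
Qed.

Lemma B_pos l r alpha beta A : 0 < r -> 0 < alpha -> alpha < beta -> beta < 1 ->
  A < PNP_AM l r alpha beta -> 0 < PNP_B l r alpha beta A.
Proof.
  intros Hr Ha Hab Hb H. unfold PNP_AM, PNP_B in *.
  assert (0 < (1-beta)/alpha) by (apply Rdiv_lt_0_compat; lra).
  assert (alpha / (1-beta) * r * ((1-beta)/alpha) = r) by (field; lra).
  assert (0 < (1-beta)/alpha * (l + alpha/(1-beta)*r - A)) by (apply Rmult_lt_0_compat; lra).
  nra.
Qed.

Lemma B_pos_inv l r alpha beta A : 0 < r -> 0 < alpha -> alpha < beta -> beta < 1 ->
  0 < PNP_B l r alpha beta A -> A < PNP_AM l r alpha beta.
Proof.
  intros Hr Ha Hab Hb H. unfold PNP_AM, PNP_B in *.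
  assert (0 < alpha/(1-beta)) by (apply Rdiv_lt_0_compat; lra).
  assert (alpha / (1-beta) * ((1-beta)/alpha * (l - A) + r) = (l - A) + alpha/(1-beta)*r) by (field; lra).
  assert (0 < alpha / (1-beta) * ((1-beta)/alpha * (l - A) + r)) by (apply Rmult_lt_0_compat; lra).
  lra.
Qed.

Lemma TRf l r alpha beta d V Q : 0 < l -> 0 < r -> 0 < alpha -> alpha < beta -> beta < 1 ->
  -1 < d < 1 -> 0 < Q -> reversal_charge l r alpha beta d V Q ->
  exists a b, 0 < a < 1 /\ 0 < b < 1 /\ V = d * ln (l/r) + mf d a - mf d b /\
    l = Q * (Kf a + (nf d a - nf d b)) /\
    r = Q * (Kf b - (1-beta)/alpha * (nf d a - nf d b)).
Proof.
  intros Hl Hr Ha Hab Hb Hd HQ [A [HA0 [HAM [HG1 HG2]]]].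
  pose proof (B_pos l r alpha beta A Hr Ha Hab Hb HAM) as HB.
  destruct (a_props Q A HQ HA0) as [Ha1 Ha2].
  destruct (a_props Q (PNP_B l r alpha beta A) HQ HB) as [Hb1 Hb2].
  set (a := Q / sqrt (Q^2 + A^2)) in *.
  set (b := Q / sqrt (Q^2 + PNP_B l r alpha beta A ^2)) in *.
  exists a, b. split; auto. split; auto.
  rewrite (core_G1 l r alpha beta Q A d a b) in HG1 by auto.
  rewrite (core_G2 l r alpha beta Q A d a b) in HG2 by auto.
  split; [lra|]. split; [lra|].
  unfold PNP_B in Hb2. nra.
Qed.

Lemma TRb l r alpha beta d V Q a b : 0 < l -> 0 < r -> 0 < alpha -> alpha < beta -> beta < 1 ->
  -1 < d < 1 -> 0 < Q -> 0 < a < 1 -> 0 < b < 1 ->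
  V = d * ln (l/r) + mf d a - mf d b ->
  l = Q * (Kf a + (nf d a - nf d b)) ->
  r = Q * (Kf b - (1-beta)/alpha * (nf d a - nf d b)) ->
  reversal_charge l r alpha beta d V Q.
Proof.
  intros Hl Hr Ha Hab Hb Hd HQ Ha1 Hb1 HV El Er.
  pose proof (Kf_pos a Ha1). pose proof (Kf_pos b Hb1).
  assert (EB: PNP_B l r alpha beta (Q * Kf a) = Q * Kf b).
  { unfold PNP_B. rewrite El at 1. rewrite Er. ring. }
  exists (Q * Kf a). split; [apply Rmult_lt_0_compat; auto|].
  split; [apply B_pos_inv; auto; rewrite EB; apply Rmult_lt_0_compat; auto|].
  split.
  - rewrite (core_G1 l r alpha beta Q (Q * Kf a) d a b); auto.
  - rewrite (core_G2 l r alpha beta Q (Q * Kf a) d a b); auto. lra.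
Qed.

Lemma Sa_gt Q A : 0 < A -> Q < sqrt (Q^2 + A^2) /\ - Q < sqrt (Q^2 + A^2).
Proof.
  intros HA. assert (H2: sqrt (Q^2 + A^2) ^ 2 = Q^2 + A^2) by (apply pow2_sqrt; nra).
  assert (H0: 0 <= sqrt (Q^2 + A^2)) by apply sqrt_pos.
  split; nra.
Qed.

Lemma G1_Q0 l r alpha beta A d : 0 < A -> 0 < PNP_B l r alpha beta A ->
  PNP_G1 l r alpha beta 0 A d = d * ln (l / r).
Proof.
  intros HA HB. unfold PNP_G1, PNP_Sb, PNP_Sa.
  replace (0^2 + A^2) with (A^2) by ring.
  replace (0^2 + PNP_B l r alpha beta A ^2) with (PNP_B l r alpha beta A ^2) by ring.
  rewrite !sqrt_pow2 by lra.
  replace (A + d * 0) with A by ring. replace (A - 0) with A by ring.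
  replace (PNP_B l r alpha beta A + d * 0) with (PNP_B l r alpha beta A) by ring.
  replace (PNP_B l r alpha beta A - 0) with (PNP_B l r alpha beta A) by ring.
  ring.
Qed.

Lemma RC0 l r alpha beta d V : 0 < l -> 0 < r -> 0 < alpha -> alpha < beta -> beta < 1 ->
  (reversal_charge l r alpha beta d V 0 <-> V = d * ln (l/r)).
Proof.
  intros Hl Hr Ha Hab Hb. split.
  - intros [A [HA0 [HAM [HG1 HG2]]]].
    pose proof (B_pos l r alpha beta A Hr Ha Hab Hb HAM) as HB.
    rewrite G1_Q0 in HG1 by auto. lra.
  - intros HV.
    set (k := (1-beta)/alpha).
    assert (Hk: 0 < k) by (unfold k; apply Rdiv_lt_0_compat; lra).
    set (A0 := ((1+k)*l + r)/(2+k)).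
    assert (HA0: 0 < A0) by (unfold A0; apply Rdiv_lt_0_compat; nra).
    assert (EB: PNP_B l r alpha beta A0 = (k*l + 2*r)/(2+k)) by (unfold PNP_B, A0; fold k; field; lra).
    assert (HB: 0 < PNP_B l r alpha beta A0) by (rewrite EB; apply Rdiv_lt_0_compat; nra).
    exists A0. split; auto. split; [apply B_pos_inv; auto|]. split.
    + rewrite G1_Q0 by auto. auto.
    + unfold PNP_G2, PNP_N, PNP_Sb, PNP_Sa.
      replace (0^2 + A0^2) with (A0^2) by ring.
      replace (0^2 + PNP_B l r alpha beta A0 ^2) with (PNP_B l r alpha beta A0 ^2) by ring.
      rewrite !sqrt_pow2 by lra. rewrite EB. unfold A0. field. lra.
Qed.

Lemma RC_sym l r alpha beta d V Q : 0 < r -> 0 < alpha -> alpha < beta -> beta < 1 ->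
  reversal_charge l r alpha beta d V Q -> reversal_charge l r alpha beta (-d) (-V) (-Q).
Proof.
  intros Hr Ha Hab Hb [A [HA0 [HAM [HG1 HG2]]]].
  pose proof (B_pos l r alpha beta A Hr Ha Hab Hb HAM) as HB.
  exists A. split; auto. split; auto.
  unfold PNP_G1, PNP_G2, PNP_N, PNP_Sb, PNP_Sa in *.
  replace ((-Q)^2) with (Q^2) by ring.
  set (B := PNP_B l r alpha beta A) in *.
  set (Sa := sqrt (Q^2 + A^2)) in *.
  set (Sb := sqrt (Q^2 + B^2)) in *.
  replace (- d * - Q) with (d * Q) by ring.
  split; [|lra].
  destruct (Sa_gt Q A HA0) as [Sa1 Sa2]. destruct (Sa_gt Q B HB) as [Sb1 Sb2]. fold Sa Sb in Sa1, Sa2, Sb1, Sb2.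
  assert (ESa: (Sa - Q) * (Sa + Q) = A^2) by (unfold Sa; replace ((sqrt (Q^2+A^2) - Q) * (sqrt (Q^2+A^2) + Q)) with (sqrt (Q^2+A^2)^2 - Q^2) by ring; rewrite pow2_sqrt by nra; ring).
  assert (ESb: (Sb - Q) * (Sb + Q) = B^2) by (unfold Sb; replace ((sqrt (Q^2+B^2) - Q) * (sqrt (Q^2+B^2) + Q)) with (sqrt (Q^2+B^2)^2 - Q^2) by ring; rewrite pow2_sqrt by nra; ring).
  assert (L1: ln (Sa - Q) + ln (Sa + Q) = 2 * ln A).
  { rewrite <- ln_mult by lra. rewrite ESa. replace (A^2) with (A*A) by ring. rewrite ln_mult by lra. ring. }
  assert (L2: ln (Sb - Q) + ln (Sb + Q) = 2 * ln B).
  { rewrite <- ln_mult by lra. rewrite ESb. replace (B^2) with (B*B) by ring. rewrite ln_mult by lra. ring. }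
  replace (Sa - - Q) with (Sa + Q) by ring. replace (Sb - - Q) with (Sb + Q) by ring.
  rewrite (ln_div A B) in * by lra. rewrite (ln_div (Sa+Q) (Sb+Q)) by lra.
  rewrite (ln_div (Sa-Q) (Sb-Q)) in HG1 by lra.
  lra.
Qed.

Lemma RC_lr l r alpha beta d Q : 0 < l -> 0 < r -> 0 < alpha -> alpha < beta -> beta < 1 -> -1 < d < 1 ->
  l = r -> reversal_charge l r alpha beta d 0 Q.
Proof.
  intros Hl Hr Ha Hab Hb Hd E. subst r.
  assert (EB: PNP_B l l alpha beta l = l) by (unfold PNP_B; ring).
  exists l. split; auto. split.
  { apply B_pos_inv; auto. rewrite EB; auto. }
  unfold PNP_G1, PNP_G2, PNP_N, PNP_Sb, PNP_Sa. rewrite EB.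
  destruct (Sa_gt Q l Hl) as [S1 S2].
  set (S := sqrt (Q^2 + l^2)) in *.
  assert (0 < S + d*Q) by (destruct (Rle_dec 0 Q); nra).
  replace ((S + d*Q)/(S + d*Q)) with 1 by (field; lra).
  replace ((S - Q)/(S - Q)) with 1 by (field; lra).
  replace (l/l) with 1 by (field; lra).
  rewrite ln_1. split; ring.
Qed.

Lemma key_cases l r k d Q a b : 0 < l -> 0 < r -> 0 < k -> -1 < d < 1 -> 0 < Q -> 0 < a < 1 -> 0 < b < 1 ->
  l = Q * (Kf a + (nf d a - nf d b)) -> r = Q * (Kf b - k * (nf d a - nf d b)) ->
  (a < b /\ r < l /\ 0 < mf d a - mf d b < (1-d) * ln (l/r)) \/
  (a = b /\ l = r) \/
  (b < a /\ l < r /\ 0 < mf d b - mf d a < (1-d) * ln (r/l)).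
Proof.
  intros Hl Hr Hk Hd HQ Ha Hb El Er.
  pose proof (Kf_pos a Ha) as Ka. pose proof (Kf_pos b Hb) as Kb.
  destruct (Rtotal_order a b) as [P|[P|P]].
  - left.
    pose proof (nf_decr d a b Hd ltac:(lra) P ltac:(lra)).
    pose proof (Kf_decr a b ltac:(lra) P ltac:(lra)).
    pose proof (mf_decr d a b Hd ltac:(lra) P ltac:(lra)).
    pose proof (LTK d a b Hd ltac:(lra) P ltac:(lra)).
    assert (HKr: r * Kf a < l * Kf b).
    { rewrite El, Er. assert (0 < Q * (nf d a - nf d b) * (Kf b + k * Kf a)) by
        (apply Rmult_lt_0_compat; [apply Rmult_lt_0_compat|]; nra). nra. }
    assert (ln (Kf a) - ln (Kf b) < ln (l/r)).
    { rewrite <- !ln_div by lra. apply ln_increasing. apply Rdiv_lt_0_compat; lra.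
      apply Rmult_lt_reg_r with (r * Kf b); [nra|]. field_simplify; nra. }
    split; auto. split; [|split; nra].
    rewrite El, Er. nra.
  - right; left. subst b. split; auto. rewrite El, Er. ring.
  - right; right.
    pose proof (nf_decr d b a Hd ltac:(lra) P ltac:(lra)).
    pose proof (Kf_decr b a ltac:(lra) P ltac:(lra)).
    pose proof (mf_decr d b a Hd ltac:(lra) P ltac:(lra)).
    pose proof (LTK d b a Hd ltac:(lra) P ltac:(lra)).
    assert (HKr: l * Kf b < r * Kf a).
    { rewrite El, Er. assert (0 < Q * (nf d b - nf d a) * (Kf b + k * Kf a)) by
        (apply Rmult_lt_0_compat; [apply Rmult_lt_0_compat|]; nra). nra. }
    assert (ln (Kf b) - ln (Kf a) < ln (r/l)).
    { rewrite <- !ln_div by lra. apply ln_increasing. apply Rdiv_lt_0_compat; lra.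
      apply Rmult_lt_reg_r with (l * Kf a); [nra|]. field_simplify; nra. }
    split; auto. split; [|split; nra].
    rewrite El, Er. nra.
Qed.

Definition Pos l r d V := (0 < ln (l/r) /\ 0 < V - d * ln (l/r) < (1-d) * ln (l/r)) \/
  (ln (l/r) < 0 /\ (1-d) * ln (l/r) < V - d * ln (l/r) < 0).

Lemma ln_lr_pos l r : 0 < l -> 0 < r -> r < l -> 0 < ln (l/r).
Proof. intros. rewrite <- ln_1. apply ln_increasing; [lra|]. apply Rmult_lt_reg_r with r; [lra|]. field_simplify; lra. Qed.

Lemma ln_lr_neg l r : 0 < l -> 0 < r -> l < r -> ln (l/r) < 0.
Proof. intros. rewrite <- ln_1. apply ln_increasing; [apply Rdiv_lt_0_compat; lra|]. apply Rmult_lt_reg_r with r; [lra|]. field_simplify; lra. Qed.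

Lemma ln_rl l r : 0 < l -> 0 < r -> ln (r/l) = - ln (l/r).
Proof. intros. rewrite !ln_div by lra. ring. Qed.

Lemma C1 l r alpha beta d V Q : 0 < l -> 0 < r -> 0 < alpha -> alpha < beta -> beta < 1 ->
  -1 < d < 1 -> 0 < Q -> reversal_charge l r alpha beta d V Q ->
  Pos l r d V \/ (l = r /\ V = d * ln (l/r)).
Proof.
  intros Hl Hr Ha Hab Hb Hd HQ HRC.
  destruct (TRf l r alpha beta d V Q Hl Hr Ha Hab Hb Hd HQ HRC) as [a [b [Ha1 [Hb1 [HV [El Er]]]]]].
  assert (Hk: 0 < (1-beta)/alpha) by (apply Rdiv_lt_0_compat; lra).
  destruct (key_cases l r ((1-beta)/alpha) d Q a b Hl Hr Hk Hd HQ Ha1 Hb1 El Er) as [[P1 [P2 P3]]|[[P1 P2]|[P1 [P2 P3]]]].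
  - left. left. pose proof (ln_lr_pos l r Hl Hr P2). split; [auto| lra].
  - right. subst b. split; auto. lra.
  - left. right. pose proof (ln_lr_neg l r Hl Hr P2). rewrite (ln_rl l r) in P3 by auto. split; [auto|nra].
Qed.

Lemma C3 l r alpha beta d V Q1 Q2 : 0 < l -> 0 < r -> 0 < alpha -> alpha < beta -> beta < 1 ->
  -1 < d < 1 -> l <> r -> 0 < Q1 -> 0 < Q2 ->
  reversal_charge l r alpha beta d V Q1 -> reversal_charge l r alpha beta d V Q2 -> Q1 = Q2.
Proof.
  intros Hl Hr Ha Hab Hb Hd Hlr HQ1 HQ2 R1 R2.
  destruct (TRf l r alpha beta d V Q1 Hl Hr Ha Hab Hb Hd HQ1 R1) as [a1 [b1 [Ha1 [Hb1 [HV1 [El1 Er1]]]]]].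
  destruct (TRf l r alpha beta d V Q2 Hl Hr Ha Hab Hb Hd HQ2 R2) as [a2 [b2 [Ha2 [Hb2 [HV2 [El2 Er2]]]]]].
  set (k := (1-beta)/alpha) in *.
  assert (Hk: 0 < k) by (unfold k; apply Rdiv_lt_0_compat; lra).
  assert (W1: phi d r (k*l + r) a1 = phi d l (k*l+r) b1).
  { unfold phi. rewrite Er1, El1. ring. }
  assert (W2: phi d r (k*l + r) a2 = phi d l (k*l+r) b2).
  { unfold phi. rewrite Er2, El2. ring. }
  assert (Hbe: 0 < k*l + r) by nra.
  assert (Hfin: a1 = a2 /\ b1 = b2 -> Q1 = Q2).
  { intros [-> ->]. pose proof (Kf_pos a2 Ha2).
    assert (Q1 * (Kf a2 + (nf d a2 - nf d b2)) = Q2 * (Kf a2 + (nf d a2 - nf d b2))) by lra.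
    assert (0 < Kf a2 + (nf d a2 - nf d b2)).
    { destruct (Rle_dec (Kf a2 + (nf d a2 - nf d b2)) 0) as [P|P]; [|lra]. exfalso. nra. }
    apply Rmult_eq_reg_r with (Kf a2 + (nf d a2 - nf d b2)); lra. }
  apply Hfin.
  destruct (key_cases l r k d Q1 a1 b1 Hl Hr Hk Hd HQ1 Ha1 Hb1 El1 Er1) as [[P1 [P2 P3]]|[[P1 P2]|[P1 [P2 P3]]]];
  destruct (key_cases l r k d Q2 a2 b2 Hl Hr Hk Hd HQ2 Ha2 Hb2 El2 Er2) as [[S1 [S2 S3]]|[[S1 S2]|[S1 [S2 S3]]]];
  try (exfalso; lra).
  - apply (GU d (mf d a1 - mf d b1) r l (k*l+r) a1 b1 a2 b2); auto; lra.
  - assert (b1 = b2 /\ a1 = a2).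
    { apply (GU d (mf d b1 - mf d a1) l r (k*l+r) b1 a1 b2 a2); auto; try lra. }
    tauto.
Qed.

Lemma C2 l r alpha beta d V : 0 < l -> 0 < r -> 0 < alpha -> alpha < beta -> beta < 1 ->
  -1 < d < 1 -> Pos l r d V -> exists Q, 0 < Q /\ reversal_charge l r alpha beta d V Q.
Proof.
  intros Hl Hr Ha Hab Hb Hd HP.
  set (k := (1-beta)/alpha).
  assert (Hk: 0 < k) by (unfold k; apply Rdiv_lt_0_compat; lra).
  assert (Hbe: 0 < k*l + r) by nra.
  destruct HP as [[HL [P1 P2]]|[HL [P1 P2]]].
  - destruct (GE d (V - d * ln (l/r)) r l (k*l+r) Hd P1 Hr Hl Hbe P2) as [u [v [Hu [Huv [Hv [Hm Hph]]]]]].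
    unfold phi in Hph.
    pose proof (Kf_pos u ltac:(lra)). pose proof (nf_decr d u v Hd Hu Huv Hv).
    set (Q := l / (Kf u + (nf d u - nf d v))).
    assert (HQ: 0 < Q) by (unfold Q; apply Rdiv_lt_0_compat; lra).
    exists Q. split; auto.
    apply (TRb l r alpha beta d V Q u v); auto; try lra.
    + unfold Q. field. lra.
    + fold k. unfold Q. apply Rmult_eq_reg_r with (Kf u + (nf d u - nf d v)); [|lra].
      field_simplify; [|lra]. nra.
  - assert (HC: 0 < - (V - d * ln (l/r))) by lra.
    assert (HC2: - (V - d * ln (l/r)) < (1-d) * ln (r/l)) by (rewrite (ln_rl l r) by auto; lra).
    destruct (GE d _ l r (k*l+r) Hd HC Hl Hr Hbe HC2) as [u [v [Hu [Huv [Hv [Hm Hph]]]]]].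
    unfold phi in Hph.
    pose proof (Kf_pos u ltac:(lra)). pose proof (Kf_pos v ltac:(lra)). pose proof (nf_decr d u v Hd Hu Huv Hv).
    assert (Hpos: 0 < Kf v + (nf d v - nf d u)).
    { assert (r * (Kf v + (nf d v - nf d u)) = l * (Kf u - k * (nf d v - nf d u))) by nra.
      assert (0 < l * (Kf u - k * (nf d v - nf d u))) by (apply Rmult_lt_0_compat; nra).
      nra. }
    set (Q := l / (Kf v + (nf d v - nf d u))).
    assert (HQ: 0 < Q) by (unfold Q; apply Rdiv_lt_0_compat; lra).
    exists Q. split; auto.
    apply (TRb l r alpha beta d V Q v u); auto; try lra.
    + unfold Q. field. lra.
    + fold k. unfold Q. apply Rmult_eq_reg_r with (Kf v + (nf d v - nf d u)); [|lra].
      field_simplify; [|lra]. nra.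
Qed.

Lemma RC_sym' l r alpha beta d V Q : 0 < r -> 0 < alpha -> alpha < beta -> beta < 1 ->
  reversal_charge l r alpha beta (-d) (-V) (-Q) -> reversal_charge l r alpha beta d V Q.
Proof.
  intros. pose proof (RC_sym l r alpha beta (-d) (-V) (-Q) H H0 H1 H2 H3).
  rewrite !Ropp_involutive in H4. exact H4.
Qed.

Lemma SGN l r alpha beta d V Q : 0 < l -> 0 < r -> 0 < alpha -> alpha < beta -> beta < 1 ->
  -1 < d < 1 -> reversal_charge l r alpha beta d V Q ->
  (0 < Q /\ (Pos l r d V \/ (l = r /\ V = d * ln (l/r)))) \/
  (Q = 0 /\ V = d * ln (l/r)) \/
  (Q < 0 /\ (Pos l r (-d) (-V) \/ (l = r /\ -V = -d * ln (l/r)))).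
Proof.
  intros Hl Hr Ha Hab Hb Hd HRC.
  destruct (Rtotal_order 0 Q) as [P|[P|P]].
  - left. split; auto. apply (C1 l r alpha beta d V Q); auto.
  - right; left. subst Q. split; auto. apply (RC0 l r alpha beta d V); auto.
  - right; right. split; auto. apply (C1 l r alpha beta (-d) (-V) (-Q)); auto; try lra.
    apply RC_sym; auto.
Qed.

Lemma Main_gen l r alpha beta d V : 0 < l -> 0 < r -> 0 < alpha -> alpha < beta -> beta < 1 ->
  -1 < d < 1 ->
  (exists! Q : R, reversal_charge l r alpha beta d V Q) <-> Rabs V < Rabs (ln (l / r)).
Proof.
  intros Hl Hr Ha Hab Hb Hd.
  set (L := ln (l/r)).
  assert (HLr: (0 < L -> r < l) /\ (L < 0 -> l < r) /\ (L = 0 -> l = r)).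
  { split; [|split]; intros HL.
    - destruct (Rtotal_order r l) as [P|[P|P]]; auto.
      + subst. unfold L in HL. replace (l/l) with 1 in HL by (field; lra). rewrite ln_1 in HL. lra.
      + pose proof (ln_lr_neg l r Hl Hr P). unfold L in HL. lra.
    - destruct (Rtotal_order l r) as [P|[P|P]]; auto.
      + subst. unfold L in HL. replace (r/r) with 1 in HL by (field; lra). rewrite ln_1 in HL. lra.
      + pose proof (ln_lr_pos l r Hl Hr P). unfold L in HL. lra.
    - destruct (Rtotal_order l r) as [P|[P|P]]; auto.
      + pose proof (ln_lr_neg l r Hl Hr P). unfold L in HL. lra.
      + pose proof (ln_lr_pos l r Hl Hr P). unfold L in HL. lra. }
  assert (HL0: l = r -> L = 0) by (intros ->; unfold L; replace (r/r) with 1 by (field; lra); apply ln_1).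

  split.
  - intros [Q0 [HQ0 Huniq]].
    destruct (Req_dec L 0) as [E|E].
    + exfalso.
      assert (Elr: l = r) by (apply HLr; auto).
      assert (HV: V = 0).
      { destruct (SGN l r alpha beta d V Q0 Hl Hr Ha Hab Hb Hd HQ0) as [[_ [P|P]]|[[_ P]|[_ [P|P]]]];
        fold L in P; try (unfold Pos in P; fold L in P); rewrite E in *; lra. }
      subst V.
      pose proof (Huniq 0 (RC_lr l r alpha beta d 0 Hl Hr Ha Hab Hb Hd Elr)).
      pose proof (Huniq 1 (RC_lr l r alpha beta d 1 Hl Hr Ha Hab Hb Hd Elr)).
      lra.
    + destruct (SGN l r alpha beta d V Q0 Hl Hr Ha Hab Hb Hd HQ0) as [[_ [P|P]]|[[_ P]|[_ [P|P]]]];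
      try (unfold Pos in P); fold L in P.
      * destruct P as [[P1 [P2 P3]]|[P1 [P2 P3]]].
        -- rewrite (Rabs_right L) by lra. apply Rabs_def1; nra.
        -- rewrite (Rabs_left L) by lra. apply Rabs_def1; nra.
      * exfalso. apply E. apply HL0. tauto.
      * rewrite P. destruct (Rle_dec 0 L) as [S|S].
        -- rewrite (Rabs_right L) by lra. apply Rabs_def1; nra.
        -- rewrite (Rabs_left L) by lra. apply Rabs_def1; nra.
      * destruct P as [[P1 [P2 P3]]|[P1 [P2 P3]]].
        -- rewrite (Rabs_right L) by lra. apply Rabs_def1; nra.
        -- rewrite (Rabs_left L) by lra. apply Rabs_def1; nra.
      * exfalso. apply E. apply HL0. tauto.
  - intros HV.
    assert (HVb: - Rabs L < V < Rabs L) by (apply Rabs_def2 in HV; lra).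
    assert (HL: L <> 0) by (intro E; rewrite E, Rabs_R0 in HVb; lra).
    assert (Hlr: l <> r) by (intro E; apply HL; apply HL0; auto).
    assert (HLc: (0 < L /\ Rabs L = L) \/ (L < 0 /\ Rabs L = - L)).
    { destruct (Rtotal_order L 0) as [P|[P|P]]; [right; split; [auto| apply Rabs_left; auto]| tauto| left; split; [auto| apply Rabs_right; lra]]. }
    assert (Hcl: forall Q, reversal_charge l r alpha beta d V Q ->
      (0 < Q /\ Pos l r d V) \/ (Q = 0 /\ V = d * L) \/ (Q < 0 /\ Pos l r (-d) (-V))).
    { intros Q HQ. destruct (SGN l r alpha beta d V Q Hl Hr Ha Hab Hb Hd HQ) as [[P1 [P|P]]|[P|[P1 [P|P]]]].
      - left; auto.
      - exfalso; tauto.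
      - right; left; auto.
      - right; right; auto.
      - exfalso; tauto. }
    unfold Pos in Hcl. fold L in Hcl.
    destruct (Rtotal_order (V - d * L) 0) as [S|[S|S]].
    +
      destruct HLc as [[P1 P2]|[P1 P2]].
      *
        assert (HP: Pos l r (-d) (-V)) by (unfold Pos; fold L; left; split; [auto|split; nra]).
        destruct (C2 l r alpha beta (-d) (-V) Hl Hr Ha Hab Hb ltac:(lra) HP) as [Q' [HQ' HR']].
        exists (-Q'). split.
        { apply RC_sym'; auto. rewrite Ropp_involutive. auto. }
        intros Q HQ. destruct (Hcl Q HQ) as [[T1 T2]|[[T1 T2]|[T1 T2]]].
        -- exfalso. destruct T2 as [[U1 [U2 U3]]|[U1 [U2 U3]]]; lra.
        -- exfalso. lra.
        -- assert (Q' = -Q); [|lra].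
           apply (C3 l r alpha beta (-d) (-V)); auto; try lra. apply RC_sym; auto.
      *
        assert (HP: Pos l r d V) by (unfold Pos; fold L; right; split; [auto|split; nra]).
        destruct (C2 l r alpha beta d V Hl Hr Ha Hab Hb Hd HP) as [Q' [HQ' HR']].
        exists Q'. split; auto.
        intros Q HQ. destruct (Hcl Q HQ) as [[T1 T2]|[[T1 T2]|[T1 T2]]].
        -- apply (C3 l r alpha beta d V); auto.
        -- exfalso. lra.
        -- exfalso. destruct T2 as [[U1 [U2 U3]]|[U1 [U2 U3]]]; lra.
    +
      exists 0. split.
      { apply (RC0 l r alpha beta d V); auto. fold L. lra. }
      intros Q HQ. destruct (Hcl Q HQ) as [[T1 T2]|[[T1 T2]|[T1 T2]]].
      * exfalso. destruct T2 as [[U1 [U2 U3]]|[U1 [U2 U3]]]; lra.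
      * lra.
      * exfalso. destruct T2 as [[U1 [U2 U3]]|[U1 [U2 U3]]]; lra.
    +
      destruct HLc as [[P1 P2]|[P1 P2]].
      * assert (HP: Pos l r d V) by (unfold Pos; fold L; left; split; [auto|split; nra]).
        destruct (C2 l r alpha beta d V Hl Hr Ha Hab Hb Hd HP) as [Q' [HQ' HR']].
        exists Q'. split; auto.
        intros Q HQ. destruct (Hcl Q HQ) as [[T1 T2]|[[T1 T2]|[T1 T2]]].
        -- apply (C3 l r alpha beta d V); auto.
        -- exfalso. lra.
        -- exfalso. destruct T2 as [[U1 [U2 U3]]|[U1 [U2 U3]]]; lra.
      * assert (HP: Pos l r (-d) (-V)) by (unfold Pos; fold L; right; split; [auto|split; nra]).
        destruct (C2 l r alpha beta (-d) (-V) Hl Hr Ha Hab Hb ltac:(lra) HP) as [Q' [HQ' HR']].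
        exists (-Q'). split.
        { apply RC_sym'; auto. rewrite Ropp_involutive. auto. }
        intros Q HQ. destruct (Hcl Q HQ) as [[T1 T2]|[[T1 T2]|[T1 T2]]].
        -- exfalso. destruct T2 as [[U1 [U2 U3]]|[U1 [U2 U3]]]; lra.
        -- exfalso. lra.
        -- assert (Q' = -Q); [|lra].
           apply (C3 l r alpha beta (-d) (-V)); auto; try lra. apply RC_sym; auto.
Qed.

Theorem theorem3p13 (l r alpha beta D1 D2 V : R)
  (hl : 0 < l) (hr : 0 < r)
  (ha : 0 < alpha) (hab : alpha < beta) (hb : beta < 1)
  (hD1 : 0 < D1) (hD2 : 0 < D2) :
  (exists! Q0 : R,
      reversal_charge l r alpha beta ((D2 - D1) / (D2 + D1)) V Q0)
  <-> Rabs V < Rabs (ln (l / r)).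
Proof.
  apply Main_gen; auto.
  split.
  - apply Rmult_lt_reg_r with (D2 + D1); [lra|]. field_simplify; lra.
  - apply Rmult_lt_reg_r with (D2 + D1); [lra|]. field_simplify; lra.
Qed.
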